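(* Let $d\in\mathbb{Z}$, $d>0$. Every rational solution $(x,y)\in\mathbb{Q}^2$ with $x\neq0$, $y\neq0$ of $$y^2=x^3-d^2x$$ is of one of the forms $$(x_1,y_1)=\left(d\frac{m+e}{m-e},\ \pm2\sqrt{d\frac{em}{m^2-e^2}}\; d\frac{m+e}{m-e}\right),\qquad (x_2,y_2)=\left(-d\frac{m-e}{m+e},\ \mp2\sqrt{d\frac{em}{m^2-e^2}}\; d\frac{m-e}{m+e}\right),$$ where $e,m\in\mathbb{N}$, $m>e$, $\gcd(m,e)=1$, and there exist $k,j\in\mathbb{N}$ with $$d=\left(\frac{k}{2j}\right)^2\frac{m^2-e^2}{em}.$$ *)

(* Defs.v *)
From HB Require Import structures.
From mathcomp Require Import all_boot all_order all_algebra all_field.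
Set Implicit Arguments. Unset Strict Implicit. Unset Printing Implicit Defensive.
Import Order.TTheory GRing.Theory Num.Theory.
Local Open Scope ring_scope.

Definition sqrtQ (q : rat) : algC := sqrtC (ratr q).

(* Main.v *)
Require Import Defs.
From HB Require Import structures.
From mathcomp Require Import all_boot all_order all_algebra all_field.
From mathcomp Require Import ring lra.
Import Order.TTheory GRing.Theory Num.Theory.
Local Open Scope ring_scope.

Lemma frac_gt1 (q : rat) : 1 < q ->
  exists m e : nat, [/\ (0 < e)%N, (e < m)%N, coprime m e & q = m%:R / e%:R].
Proof.
move=> hq.
have hn : 0 < numq q by rewrite numq_gt0; apply: lt_trans hq.
have Hm : ((`|numq q|%N)%:R : rat) = (numq q)%:~R by rewrite natr_absz gtr0_norm.
have He : ((`|denq q|%N)%:R : rat) = (denq q)%:~R by rewrite natr_absz gtr0_norm ?denq_gt0.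
have hq' : q = (`|numq q|%N)%:R / (`|denq q|%N)%:R by rewrite Hm He divq_num_den.
have he : (0 < `|denq q|)%N by rewrite absz_gt0 gt_eqF ?denq_gt0.
exists `|numq q|%N, `|denq q|%N; split => //; last exact: coprime_num_den.
have he' : (0 : rat) < (`|denq q|%N)%:R by rewrite ltr0n.
rewrite -(ltr_nat rat).
have h1 : 1 < (`|numq q|%N)%:R / (`|denq q|%N)%:R :> rat by rewrite -hq'.
by move: h1; rewrite ltr_pdivlMr // mul1r.
Qed.

Lemma common (D : rat) (m e : nat) (x y : rat) :
  (0 < e)%N -> (e < m)%N -> x != 0 ->
  y ^+ 2 = 4%:R * (D * (e%:R * m%:R) / (m%:R ^+ 2 - e%:R ^+ 2)) * x ^+ 2 ->
  (exists k j : nat,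
           D = (k%:R / (2 * j%:R)) ^+ 2
                           * ((m%:R ^+ 2 - e%:R ^+ 2) / (e%:R * m%:R))) /\
  (ratr y = 2%:R * sqrtQ (D * (e%:R * m%:R) / (m%:R ^+ 2 - e%:R ^+ 2)) * ratr x
   \/ ratr y = - (2%:R * sqrtQ (D * (e%:R * m%:R) / (m%:R ^+ 2 - e%:R ^+ 2)) * ratr x)).
Proof.
move=> he hem hx hy.
set r := D * (e%:R * m%:R) / (m%:R ^+ 2 - e%:R ^+ 2).
have hE : (e%:R : rat) != 0 by rewrite pnatr_eq0 -lt0n.
have hM : (m%:R : rat) != 0 by rewrite pnatr_eq0 -lt0n (leq_ltn_trans _ hem).
have hME : (m%:R ^+ 2 - e%:R ^+ 2 : rat) != 0.
  rewrite subr_eq0 eqf_sqr negb_or; apply/andP; split.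
    by rewrite eqr_nat neq_ltn hem orbT.
  apply/negP => /eqP h.
  have : (0 : rat) < m%:R + e%:R by rewrite -natrD ltr0n addn_gt0 he orbT.
  by rewrite h addNr ltxx.
split.
  set w := y / x.
  exists `|numq w|%N, `|denq w|%N.
  have hd : ((`|denq w|%N)%:R : rat) != 0.
    by rewrite natr_absz gtr0_norm ?denq_gt0 // intr_eq0 gt_eqF ?denq_gt0.
  have hw : w ^+ 2 = ((`|numq w|%N)%:R / (`|denq w|%N)%:R) ^+ 2.
    rewrite !natr_absz !intr_norm -{1}[w]divq_num_den !expr_div_n.
    by rewrite !real_normK ?num_real.
  have hr : r = (w / 2) ^+ 2.
    apply: (mulIf (_ : 4%:R * x ^+ 2 != 0)).
      by rewrite mulf_neq0 ?expf_neq0 // pnatr_eq0.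
    rewrite mulrA (mulrC r) -hy /w; field; exact: hx.
  have -> : ((`|numq w|%N)%:R / (2 * (`|denq w|%N)%:R)) ^+ 2 = r.
    have hr' : r = w ^+ 2 / 2 ^+ 2 by rewrite hr expr_div_n.
    rewrite hr' hw; field; by rewrite hd.
  rewrite /r; field; rewrite hME hE hM //.
have hy' : y ^+ 2 = 4%:R * r * x ^+ 2 by rewrite hy.
clearbody r.
have hs : sqrtQ r ^+ 2 = ratr r by rewrite /sqrtQ sqrtCK.
have h := congr1 (fun z : rat => (ratr z : algC)) hy'.
move: h => /=; rewrite !rmorphXn !rmorphM /= rmorph_nat -hs => h.
have : ratr y ^+ 2 = (2%:R * sqrtQ r * ratr x) ^+ 2 :> algC.
  rewrite h; ring.
by move/eqP; rewrite eqf_sqr => /orP [] /eqP ->; [left | right].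
Qed.

Theorem lemma10 (d : int) (hd : 0 < d) (x y : rat) :
  x != 0 -> y != 0 -> y ^+ 2 = x ^+ 3 - (d%:~R) ^+ 2 * x ->
  exists e m : nat,
    [/\ (e < m)%N, coprime m e,
        (exists k j : nat,
           (d%:~R : rat) = (k%:R / (2 * j%:R)) ^+ 2
                           * ((m%:R ^+ 2 - e%:R ^+ 2) / (e%:R * m%:R))) &
        let D : rat := d%:~R in
        let s : algC := sqrtQ (D * (e%:R * m%:R) / (m%:R ^+ 2 - e%:R ^+ 2)) in
        (x = D * (m%:R + e%:R) / (m%:R - e%:R) /\
           (ratr y = 2%:R * s * ratr (D * (m%:R + e%:R) / (m%:R - e%:R))
            \/ ratr y = - (2%:R * s * ratr (D * (m%:R + e%:R) / (m%:R - e%:R)))))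
        \/
        (x = - (D * (m%:R - e%:R) / (m%:R + e%:R)) /\
           (ratr y = - (2%:R * s * ratr (D * (m%:R - e%:R) / (m%:R + e%:R)))
            \/ ratr y = 2%:R * s * ratr (D * (m%:R - e%:R) / (m%:R + e%:R))))].
Proof.
move=> hx hy hE.
have hD : (0 : rat) < d%:~R by rewrite ltr0z.
move: hE hD; set D : rat := d%:~R => hE hD.
have hy2 : 0 < y ^+ 2 by rewrite exprn_even_gt0.
have hpos : 0 < x * (x - D) * (x + D).
  by rewrite (_ : _ * _ = x ^+ 3 - D ^+ 2 * x); [rewrite -hE | ring].
case: (ltgtP x 0) => hx0; last by rewrite hx0 eqxx in hx.
- (* -D < x < 0 *)
  have hP : (x - D) * (x + D) < 0.
    move: hpos; rewrite -mulrA (mulrC x); move: ((x - D) * (x + D)) => P hP; nra.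
  have hxD : - D < x by nra.
  have hq : 1 < (D - x) / (D + x) by rewrite ltr_pdivlMr; lra.
  have [m [e [he hem hco hqe]]] := frac_gt1 _ hq.
  have hE0 : (e%:R : rat) != 0 by rewrite pnatr_eq0 -lt0n.
  have hMe : (e%:R : rat) < m%:R by rewrite ltr_nat.
  have he0 : (0 : rat) < e%:R by rewrite ltr0n.
  have hX : x = - (D * (m%:R - e%:R) / (m%:R + e%:R)).
    have hDx : D + x != 0 by apply: lt0r_neq0; lra.
    have hme : (m%:R + e%:R : rat) != 0 by apply: lt0r_neq0; lra.
    have h : (D - x) * e%:R = m%:R * (D + x).
      by rewrite -[(D - x)](@divfK _ (D + x)) // hqe; field.
    apply: (mulIf hme); rewrite mulNr divfK //; nra.
  have hyr : y ^+ 2 = 4%:R * (D * (e%:R * m%:R) / (m%:R ^+ 2 - e%:R ^+ 2)) * x ^+ 2.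
    rewrite hE hX; field.
    have h1 : (m%:R ^+ 2 - e%:R ^+ 2 : rat) != 0 by apply: lt0r_neq0; nra.
    by rewrite h1 ?andbT lt0r_neq0 //; lra.
  have [hkj hs] := common _ _ _ _ _ he hem hx hyr.
  exists e, m; split => //; right; split => //.
  by move: hs; rewrite hX rmorphN mulrN opprK.
- (* x > D *)
  have hP : 0 < (x - D) * (x + D).
    move: hpos; rewrite -mulrA (mulrC x); move: ((x - D) * (x + D)) => P hP; nra.
  have hxD : D < x by nra.
  have hq : 1 < (x + D) / (x - D) by rewrite ltr_pdivlMr; lra.
  have [m [e [he hem hco hqe]]] := frac_gt1 _ hq.
  have hE0 : (e%:R : rat) != 0 by rewrite pnatr_eq0 -lt0n.
  have hMe : (e%:R : rat) < m%:R by rewrite ltr_nat.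
  have he0 : (0 : rat) < e%:R by rewrite ltr0n.
  have hX : x = D * (m%:R + e%:R) / (m%:R - e%:R).
    have hDx : x - D != 0 by apply: lt0r_neq0; lra.
    have hme : (m%:R - e%:R : rat) != 0 by apply: lt0r_neq0; lra.
    have h : (x + D) * e%:R = m%:R * (x - D).
      by rewrite -[(x + D)](@divfK _ (x - D)) // hqe; field.
    apply: (mulIf hme); rewrite divfK //; nra.
  have hyr : y ^+ 2 = 4%:R * (D * (e%:R * m%:R) / (m%:R ^+ 2 - e%:R ^+ 2)) * x ^+ 2.
    rewrite hE hX; field.
    have h1 : (m%:R ^+ 2 - e%:R ^+ 2 : rat) != 0 by apply: lt0r_neq0; nra.
    by rewrite h1 ?andbT lt0r_neq0 //; lra.
  have [hkj hs] := common _ _ _ _ _ he hem hx hyr.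
  exists e, m; split => //; left; split => //.
  by rewrite -hX.
Qed.
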